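(* Let $\mathcal{A}=\mathcal{R}*_K\mathcal{S}*_L\mathcal{T}\in\mathbb{C}^{I_1\times\cdots\times I_N\times J_1\times\cdots\times J_M}$, where $\mathcal{R}\in\mathbb{C}^{I_1\times\cdots\times I_N\times H_1\times\cdots\times H_K}$, $\mathcal{S}\in\mathbb{C}^{H_1\times\cdots\times H_K\times G_1\times\cdots\times G_L}$ and $\mathcal{T}\in\mathbb{C}^{G_1\times\cdots\times G_L\times J_1\times\cdots\times J_M}$. Then $\mathcal{A}_{\pi\dagger}=\mathcal{A}^{\dagger}$ if and only if $(\mathcal{R}^{\dagger}*_N\mathcal{A}*_M\mathcal{T}^{\dagger})^{\dagger}=\mathcal{T}*_M\mathcal{A}^{\dagger}*_N\mathcal{R}$. In that case $\mathcal{A}_{\pi\dagger}=\mathcal{A}^{\dagger}=\mathcal{B}=\mathcal{C}$, where $\mathcal{B}=\mathcal{T}^{\dagger}*_L(\mathcal{A}*_M\mathcal{T}^{\dagger})^{\dagger}$ and $\mathcal{C}=(\mathcal{R}^{\dagger}*_N\mathcal{A})^{\dagger}*_K\mathcal{R}^{\dagger}$.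
   Context: $\mathbb{C}^{I_1\times\cdots\times I_N}$ denotes the set of complex tensors of order $N$ and dimension $I_1\times\cdots\times I_N$. For $\mathcal{A}\in\mathbb{C}^{I_1\times\cdots\times I_N\times K_1\times\cdots\times K_N}$ and $\mathcal{B}\in\mathbb{C}^{K_1\times\cdots\times K_N\times J_1\times\cdots\times J_M}$, the Einstein product $\mathcal{A}*_N\mathcal{B}$ is defined by $(\mathcal{A}*_N\mathcal{B})_{i_1\dots i_N j_1\dots j_M}=\sum_{k_1,\dots,k_N}a_{i_1\dots i_N k_1\dots k_N}b_{k_1\dots k_N j_1\dots j_M}$; it is associative. $\mathcal{A}^H$ denotes the conjugate transpose. For $\mathcal{A}\in\mathbb{C}^{I_1\times\cdots\times I_N\times J_1\times\cdots\times J_M}$ the Moore–Penrose inverse $\mathcal{A}^{\dagger}$ is the unique $\mathcal{X}\in\mathbb{C}^{J_1\times\cdots\times J_M\times I_1\times\cdots\times I_N}$ with $\mathcal{A}*_M\mathcal{X}*_N\mathcal{A}=\mathcal{A}$, $\mathcal{X}*_N\mathcal{A}*_M\mathcal{X}=\mathcal{X}$, $(\mathcal{A}*_M\mathcal{X})^H=\mathcal{A}*_M\mathcal{X}$, $(\mathcal{X}*_N\mathcal{A})^H=\mathcal{X}*_N\mathcal{A}$. Given the factorization $\mathcal{A}=\mathcal{R}*_K\mathcal{S}*_L\mathcal{T}$, the product Moore–Penrose inverse of $\mathcal{A}$ is $\mathcal{A}_{\pi\dagger}=\mathcal{T}^{\dagger}*_L(\mathcal{R}^{\dagger}*_N\mathcal{A}*_M\mathcal{T}^{\dagger})^{\dagger}*_K\mathcal{R}^{\dagger}$.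 *)

(* Defs.v *)
From HB Require Import structures.
From mathcomp Require Import all_boot all_order all_algebra.
From mathcomp Require Import reals complex.
From Stdlib Require Import ClassicalEpsilon.
Set Implicit Arguments. Unset Strict Implicit. Unset Printing Implicit Defensive.
Import Order.TTheory GRing.Theory Num.Theory.
Local Open Scope ring_scope.

Fixpoint midx (d : seq nat) : finType :=
  if d is n :: d' then ('I_n * midx d')%type else unit.

Section Tensors.
Variable R : realType.
Local Notation C := (R[i]).

(* A tensor in C^{I_1 x ... x I_N x J_1 x ... x J_M}, with I = [:: I_1; ...; I_N]
   and J = [:: J_1; ...; J_M]. *)
Definition tensor (I J : seq nat) := midx I -> midx J -> C.

Definition einstein (I K J : seq nat) (A : tensor I K) (B : tensor K J) : tensor I J :=
  fun i j => \sum_(k : midx K) A i k * B k j.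

Definition ctrans (I J : seq nat) (A : tensor I J) : tensor J I :=
  fun j i => (A i j)^*.

Definition is_MP (I J : seq nat) (A : tensor I J) (X : tensor J I) : Prop :=
  [/\ einstein (einstein A X) A = A,
      einstein (einstein X A) X = X,
      ctrans (einstein A X) = einstein A X &
      ctrans (einstein X A) = einstein X A].

Definition mpinv (I J : seq nat) (A : tensor I J) : tensor J I :=
  epsilon (inhabits (fun _ _ => 0)) (is_MP A).

Definition pmpinv (I H G J : seq nat) (Rt : tensor I H) (T : tensor G J)
  (A : tensor I J) : tensor J I :=
  einstein (einstein (mpinv T) (mpinv (einstein (einstein (mpinv Rt) A) (mpinv T))))
           (mpinv Rt).
End Tensors.

(* Main.v *)
Require Import Defs.
From HB Require Import structures.
From mathcomp Require Import all_boot all_order all_algebra.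
From mathcomp Require Import reals complex.
From Stdlib Require Import FunctionalExtensionality.
Set Implicit Arguments. Unset Strict Implicit. Unset Printing Implicit Defensive.
Import Order.TTheory GRing.Theory Num.Theory.
Local Open Scope ring_scope.

From Stdlib Require Import ClassicalEpsilon.
Section T.
Variable R : realType.
Local Notation C := (R[i]).
Definition mt (X Y : finType) := X -> Y -> C.
Definition emul (X Y Z : finType) (A : mt X Y) (B : mt Y Z) : mt X Z :=
  fun x z => \sum_(y : Y) A x y * B y z.
Definition ct (X Y : finType) (A : mt X Y) : mt Y X := fun y x => (A x y)^*.
Definition tz (X Y : finType) : mt X Y := fun _ _ => 0.
Definition tid (X : finType) : mt X X := fun x y => (x == y)%:R.
Arguments tid X : clear implicits.
Arguments tz X Y : clear implicits.
Definition tsub (X Y : finType) (A B : mt X Y) : mt X Y := fun x y => A x y - B x y.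

Lemma mulA (X Y Z W : finType) (A : mt X Y) (B : mt Y Z) (D : mt Z W) :
  emul (emul A B) D = emul A (emul B D).
Proof.
apply: functional_extensionality => x; apply: functional_extensionality => w.
rewrite /emul.
under eq_bigr do rewrite mulr_suml.
under [RHS]eq_bigr do rewrite mulr_sumr.
rewrite exchange_big /=; apply: eq_bigr => y _; apply: eq_bigr => z _.
by rewrite mulrA.
Qed.

Lemma ctM (X Y Z : finType) (A : mt X Y) (B : mt Y Z) :
  ct (emul A B) = emul (ct B) (ct A).
Proof.
apply: functional_extensionality => z; apply: functional_extensionality => x.
rewrite /ct /emul rmorph_sum; apply: eq_bigr => y _.
by rewrite rmorphM mulrC.
Qed.

Lemma ctK (X Y : finType) (A : mt X Y) : ct (ct A) = A.
Proof.
apply: functional_extensionality => x; apply: functional_extensionality => y.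
by rewrite /ct conjCK.
Qed.

Lemma mul1t (X Y : finType) (A : mt X Y) : emul (tid X) A = A.
Proof.
apply: functional_extensionality => x; apply: functional_extensionality => y.
rewrite /emul /tid (bigD1 x) //= eqxx mul1r big1 ?addr0 // => k /negbTE.
by rewrite eq_sym => ->; rewrite mul0r.
Qed.

Lemma mult1 (X Y : finType) (A : mt X Y) : emul A (tid Y) = A.
Proof.
apply: functional_extensionality => x; apply: functional_extensionality => y.
rewrite /emul /tid (bigD1 y) //= eqxx mulr1 big1 ?addr0 // => k /negbTE.
by move=> ->; rewrite mulr0.
Qed.

Lemma mulBt (X Y Z : finType) (A B : mt X Y) (D : mt Y Z) :
  emul (tsub A B) D = tsub (emul A D) (emul B D).
Proof.
apply: functional_extensionality => x; apply: functional_extensionality => y.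
by rewrite /emul /tsub -sumrB; apply: eq_bigr => k _; rewrite mulrBl.
Qed.

Lemma multB (X Y Z : finType) (D : mt X Y) (A B : mt Y Z) :
  emul D (tsub A B) = tsub (emul D A) (emul D B).
Proof.
apply: functional_extensionality => x; apply: functional_extensionality => y.
by rewrite /emul /tsub -sumrB; apply: eq_bigr => k _; rewrite mulrBr.
Qed.

Lemma ctB (X Y : finType) (A B : mt X Y) : ct (tsub A B) = tsub (ct A) (ct B).
Proof.
apply: functional_extensionality => x; apply: functional_extensionality => y.
by rewrite /ct /tsub rmorphB.
Qed.

Lemma mul0t (X Y Z : finType) (D : mt Y Z) : emul (tz X Y) D = tz X Z.
Proof.
apply: functional_extensionality => x; apply: functional_extensionality => y.
by rewrite /emul /tz big1 // => k _; rewrite mul0r.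
Qed.

Lemma mult0 (X Y Z : finType) (D : mt X Y) : emul D (tz Y Z) = tz X Z.
Proof.
apply: functional_extensionality => x; apply: functional_extensionality => y.
by rewrite /emul /tz big1 // => k _; rewrite mulr0.
Qed.

Lemma tsubxx (X Y : finType) (A : mt X Y) : tsub A A = tz X Y.
Proof.
apply: functional_extensionality => x; apply: functional_extensionality => y.
by rewrite /tsub /tz subrr.
Qed.

Lemma tsub_eq0 (X Y : finType) (A B : mt X Y) : tsub A B = tz X Y -> A = B.
Proof.
move=> H; apply: functional_extensionality => x; apply: functional_extensionality => y.
by apply/eqP; rewrite -subr_eq0; apply/eqP; move: (H) => /(congr1 (fun f => f x y)).
Qed.

Lemma pos0 (X Y : finType) (D : mt X Y) : emul D (ct D) = tz X X -> D = tz X Y.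
Proof.
move=> H; apply: functional_extensionality => x; apply: functional_extensionality => y.
have := congr1 (fun f => f x x) H; rewrite /emul /ct /tz => /psumr_eq0P H1.
by apply/eqP; rewrite -mul_conjC_eq0; apply/eqP; apply: H1 => // k _; apply: mul_conjC_ge0.
Qed.

Lemma pos0' (X Y : finType) (D : mt X Y) : emul (ct D) D = tz Y Y -> D = tz X Y.
Proof.
move=> H; rewrite -[D]ctK; have -> : ct D = tz Y X by apply: pos0; rewrite ctK.
by apply: functional_extensionality => x; apply: functional_extensionality => y; rewrite /ct /tz conjC0.
Qed.

Lemma ginv (X Y : finType) (A : mt X Y) : exists G : mt Y X, emul (emul A G) A = A.
Proof.
pose M : 'M[C]_(#|X|, #|Y|) := \matrix_(i, j) A (enum_val i) (enum_val j).
pose P := pinvmx M.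
exists (fun y x => P (enum_rank y) (enum_rank x)).
have H := mulmxKpV (submx_refl M).
apply: functional_extensionality => x; apply: functional_extensionality => y.
have := congr1 (fun N : 'M_(_,_) => N (enum_rank x) (enum_rank y)) H => /=.
rewrite !mxE !enum_rankK => <-.
rewrite /emul (reindex (@enum_val X predT)) /=; last by apply: onW_bij; apply: enum_val_bij.
apply: eq_bigr => k _; rewrite !mxE enum_rankK enum_valK; congr (_ * _).
rewrite (reindex (@enum_val Y predT)) /=; last by apply: onW_bij; apply: enum_val_bij.
by apply: eq_bigr => l _; rewrite !mxE enum_rankK enum_valK.
Qed.

Definition isMP (X Y : finType) (A : mt X Y) (B : mt Y X) : Prop :=
  [/\ emul (emul A B) A = A, emul (emul B A) B = B,
      ct (emul A B) = emul A B & ct (emul B A) = emul B A].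

Lemma LA (X Y : finType) (A : mt X Y) (Z : mt Y Y) :
  emul (emul (emul (ct A) A) Z) (emul (ct A) A) = emul (ct A) A ->
  emul A (emul Z (emul (ct A) A)) = A.
Proof.
move=> H; apply: tsub_eq0; apply: pos0'.
set D := tsub _ A.
have HD : emul (ct A) D = tz _ _.
  by rewrite /D multB -(mulA (ct A)) -(mulA _ Z) H tsubxx.
rewrite /D ctB mulBt -/D ctM mulA.
rewrite HD mult0 tsubxx.
done.
Qed.

Lemma ctQ (X Y : finType) (A : mt X Y) : ct (emul (ct A) A) = emul (ct A) A.
Proof. by rewrite ctM ctK. Qed.

Lemma ginv_ct (X : finType) (Q Z : mt X X) : ct Q = Q ->
  emul (emul Q Z) Q = Q -> emul (emul Q (ct Z)) Q = Q.
Proof.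
move=> hQ H; have := congr1 (@ct _ _) H; rewrite !ctM hQ => E.
by rewrite mulA.
Qed.

Lemma LB (X Y : finType) (A : mt X Y) (Z : mt Y Y) :
  emul (emul (emul (ct A) A) Z) (emul (ct A) A) = emul (ct A) A ->
  ct (emul A (emul Z (ct A))) = emul A (emul Z (ct A)).
Proof.
move=> H; have H' := ginv_ct (ctQ A) H.
have E1 := LA H; have E2 := LA H'.
set D := tsub (emul A (emul Z (ct A))) (emul A (emul (ct Z) (ct A))).
have HD : emul D A = tz _ _.
  by rewrite /D mulBt !mulA E1 E2 tsubxx.
have : D = tz _ _.
  apply: pos0; rewrite /D ctB !ctM !ctK -/D !mulA.
  by rewrite multB -!(mulA D) HD !mul0t tsubxx.
move/tsub_eq0 => E; by rewrite {2}E !ctM !ctK mulA.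
Qed.

Lemma ctx2 (W X Y Z V : finType) (A : mt W X) (B : mt X Y) (D : mt Y Z) (E : mt W Z) :
  emul A (emul B D) = E -> forall F : mt Z V, emul A (emul B (emul D F)) = emul E F.
Proof. by move=> H F; rewrite -H !mulA. Qed.

Lemma ctx3 (W X Y Z U V : finType) (A : mt W X) (B : mt X Y) (D : mt Y Z) (G : mt Z U)
  (E : mt W U) :
  emul A (emul B (emul D G)) = E -> forall F : mt U V,
  emul A (emul B (emul D (emul G F))) = emul E F.
Proof. by move=> H F; rewrite -H !mulA. Qed.

Lemma mp_ex (X Y : finType) (A : mt X Y) : exists B, isMP A B.
Proof.
have [Z2 H2] := ginv (emul (ct A) A).
have [Z1 H1] := ginv (emul (ct (ct A)) (ct A)).
have a := LA H2; have b := LB H2.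
have H1' := ginv_ct (ctQ (ct A)) H1.
have c : emul A (emul (ct A) (emul Z1 A)) = A.
  have := congr1 (@ct _ _) (LA H1'); rewrite !ctM !ctK !mulA => E.
  exact E.
have d := LB H1; rewrite ctK in d.
have a' := ctx3 a; have c' := ctx3 c.
exists (emul (emul (emul (ct A) Z1) A) (emul Z2 (ct A))).
split; rewrite !mulA.
- by rewrite a c.
- by rewrite a' c'.
- by rewrite c' b.
- by rewrite a d.
Qed.

Lemma mp_uniq (X Y : finType) (A : mt X Y) (B D : mt Y X) :
  isMP A B -> isMP A D -> B = D.
Proof.
move=> [b1 b2 b3 b4] [d1 d2 d3 d4].
have e1 : B = emul B (emul (ct B) (ct A)).
  by rewrite -ctM b3 -mulA b2.
have e2 : ct A = emul (ct A) (emul A D).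
  by rewrite -d3 -ctM d1.
have e3 : B = emul B (emul A D).
  by rewrite {1}e1 {1}e2 -(mulA (ct B)) -ctM b3 -!mulA b2.
have f1 : D = emul (emul (ct A) (ct D)) D.
  by rewrite -ctM d4 d2.
have f2 : ct A = emul (emul B A) (ct A).
  by rewrite -b4 -ctM -mulA b1.
rewrite e3; apply: esym; rewrite {1}f1 f2 !mulA -(mulA (ct A)) -ctM d4.
by rewrite d2.
Qed.

Lemma mp_sym (X Y : finType) (A : mt X Y) (B : mt Y X) : isMP A B -> isMP B A.
Proof. by case=> *; split. Qed.

Lemma G1 (X Y : finType) (T : mt X Y) (Td : mt Y X) : isMP T Td ->
  emul Td (emul T (ct T)) = ct T.
Proof. by case=> h1 h2 h3 h4; rewrite -mulA -{1}h4 -ctM -mulA h1. Qed.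

Lemma G1' (X Y : finType) (T : mt X Y) (Td : mt Y X) : isMP T Td ->
  emul (ct T) (emul T Td) = ct T.
Proof. by case=> h1 h2 h3 h4; rewrite -h3 -ctM h1. Qed.

Lemma G2a (X Y : finType) (A : mt X Y) (B : mt Y X) : isMP A B ->
  B = emul (ct A) (emul (ct B) B).
Proof. by case=> h1 h2 h3 h4; rewrite -mulA -ctM h4 h2. Qed.

Lemma G2b (X Y : finType) (A : mt X Y) (B : mt Y X) : isMP A B ->
  B = emul (emul B (ct B)) (ct A).
Proof. by case=> h1 h2 h3 h4; rewrite mulA -ctM h3 -mulA h2. Qed.

Lemma P3 (X Y Z : finType) (A : mt X Y) (Ad : mt Y X) (T : mt Z Y) (Td : mt Y Z)
  (E : mt Z X) :
  isMP A Ad -> isMP T Td -> ct A = emul (ct T) E -> emul Td (emul T Ad) = Ad.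
Proof.
move=> ha ht hE.
rewrite {1}(G2a ha) hE !mulA -(mulA T) -(mulA Td) (G1 ht) -mulA -hE.
by rewrite -(G2a ha).
Qed.

Lemma P4 (X Y Z : finType) (A : mt X Y) (Ad : mt Y X) (Rt : mt X Z) (Rd : mt Z X)
  (E : mt Y Z) :
  isMP A Ad -> isMP Rt Rd -> ct A = emul E (ct Rt) -> emul Ad (emul Rt Rd) = Ad.
Proof.
move=> ha hr hE.
rewrite {1}(G2b ha) hE !mulA (G1' hr) -hE -mulA.
by rewrite -(G2b ha).
Qed.
End T.

Lemma mpinvP (R : realType) (I J : seq nat) (A : tensor R I J) : isMP A (mpinv A).
Proof.
rewrite /mpinv; apply: epsilon_spec.
have [B HB] := mp_ex A; by exists B.
Qed.

Lemma mpE (R : realType) (I J : seq nat) (A : tensor R I J) (B : tensor R J I) :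
  isMP A B -> mpinv A = B.
Proof. exact: mp_uniq (mpinvP A). Qed.

Lemma einE (R : realType) (I K J : seq nat) (A : tensor R I K) (B : tensor R K J) :
  einstein A B = emul A B.
Proof. by []. Qed.

Lemma ctE (R : realType) (I J : seq nat) (A : tensor R I J) : ctrans A = ct A.
Proof. by []. Qed.

Theorem theorem3p9 (R : realType) (I J H G : seq nat)
  (Rt : tensor R I H) (S : tensor R H G) (T : tensor R G J) (A : tensor R I J) :
  A = einstein (einstein Rt S) T ->
  (pmpinv Rt T A = mpinv A <->
     mpinv (einstein (einstein (mpinv Rt) A) (mpinv T))
     = einstein (einstein T (mpinv A)) Rt) /\
  (pmpinv Rt T A = mpinv A ->
     let B := einstein (mpinv T) (mpinv (einstein A (mpinv T))) in
     let Cc := einstein (mpinv (einstein (mpinv Rt) A)) (mpinv Rt) in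
     [/\ pmpinv Rt T A = mpinv A, mpinv A = B & B = Cc]).
Proof.
move=> hA.
rewrite /pmpinv !einE; rewrite einE in hA.
have ad := mpinvP A; have rd := mpinvP Rt; have td := mpinvP T.
set Ad := mpinv A in ad *; set Rd := mpinv Rt in rd *; set Td := mpinv T in td *.
set M := emul (emul Rd A) Td.
have xd := mpinvP M; set X := mpinv M in xd *.
have [r1 r2 r3 r4] := rd; have [t1 t2 t3 t4] := td.
have [a1 a2 a3 a4] := ad; have [x1 x2 x3 x4] := xd.
have h1 : emul A (emul Td T) = A by rewrite {1}hA !mulA -(mulA T) t1 hA mulA.
have h2 : emul Rt (emul Rd A) = A by rewrite {1}hA -!mulA r1 hA.
have h3 : emul Td (emul T Ad) = Ad.
  by apply: (P3 ad td (E := ct (emul Rt S))); rewrite hA ctM.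
have h4 : emul Ad (emul Rt Rd) = Ad.
  by apply: (P4 ad rd (E := ct (emul S T))); rewrite hA mulA ctM.
have h5 : emul T (emul Td X) = X.
  by apply: (P3 xd (mp_sym td) (E := ct (emul Rd A))); rewrite /M ctM.
have h6 : emul X (emul Rd Rt) = X.
  by apply: (P4 xd (mp_sym rd) (E := ct (emul A Td))); rewrite /M mulA ctM.
have hN1 : emul A Td = emul Rt M by rewrite /M -mulA h2.
have hN2 : emul Rd A = emul M T by rewrite /M !mulA h1.
clearbody M.
have h5c := ctx2 h5; have h6c := ctx2 h6.
have x1' : emul M (emul X M) = M by rewrite -mulA x1.
have x2' : emul X (emul M X) = X by rewrite -mulA x2.
have x1c := ctx2 x1'; have x2c := ctx2 x2'.
split.
  split.
  - move=> Hp; by rewrite -Hp !mulA h6 h5.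
  - move=> Hx; by rewrite Hx !mulA h4 h3.
move=> Hp.
have Hp' : emul Td (emul X Rd) = Ad by rewrite -mulA.
have Hpc := ctx2 Hp'.
have eB : mpinv (emul A Td) = emul X Rd.
  apply: mpE.
  have hN := hN1.
  split.
  - by rewrite hN !mulA h6c x1'.
  - by rewrite hN !mulA h6c x2c.
  - by rewrite !mulA Hp'.
  - by rewrite hN !mulA h6c.
have eC : mpinv (emul Rd A) = emul Td X.
  apply: mpE.
  have hN := hN2.
  split.
  - by rewrite hN !mulA h5c x1c.
  - by rewrite hN !mulA h5 x2'.
  - by rewrite hN !mulA h5.
  - by rewrite !mulA Hpc.
rewrite eB eC -mulA Hp.
by split.
Qed.
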